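(* Let $(\mathcal{C},\mathbb{E},\mathfrak{s})$ be an extriangulated category and let $\varphi_\bullet=(\varphi_1,\varphi_2,\varphi_3)$ be a morphism of $\mathfrak{s}$-triangles from $X_\bullet=(X_1\xrightarrow{f_1}X_2\xrightarrow{f_2}X_3\overset{\delta}{\dashrightarrow})$ to $Y_\bullet=(Y_1\xrightarrow{g_1}Y_2\xrightarrow{g_2}Y_3\overset{\delta'}{\dashrightarrow})$. Then: (1) The following are equivalent: (a) $\underline{\varphi_\bullet}=0$ in $\mathfrak{s}\textup{-tri}(\mathcal{C})/\mathcal{R}_2$; (b) $\varphi_1$ factors through $f_1$; (c) $\varphi_3$ factors through $g_2$. (2) $\underline{\varphi_\bullet}$ is a monomorphism in $\mathfrak{s}\textup{-tri}(\mathcal{C})/\mathcal{R}_2$ if and only if $\begin{pmatrix} f_1\\ \varphi_1\end{pmatrix}:X_1\to X_2\oplus Y_1$ is a section (split monomorphism).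
   Context: An extriangulated category $(\mathcal{C},\mathbb{E},\mathfrak{s})$ (Nakaoka–Palu) is an additive category with an additive bifunctor $\mathbb{E}:\mathcal{C}^{\mathrm{op}}\times\mathcal{C}\to Ab$ and a realization $\mathfrak{s}$ assigning to each $\delta\in\mathbb{E}(C,A)$ an equivalence class of sequences $A\to B\to C$, giving $\mathfrak{s}$-triangles $A\to B\to C\overset{\delta}{\dashrightarrow}$, satisfying axioms (ET1)–(ET4)$^{\mathrm{op}}$. $\mathfrak{s}\textup{-tri}(\mathcal{C})$ is the category whose objects are $\mathfrak{s}$-triangles and whose morphisms $X_\bullet\to Y_\bullet$ (notation as in the claim) are triples $(\varphi_1,\varphi_2,\varphi_3)$ with $\varphi_2f_1=g_1\varphi_1$, $\varphi_3f_2=g_2\varphi_2$ and $\varphi_{1*}\delta=\varphi_3^*\delta'$, where $a_*\delta=\mathbb{E}(X_3,a)(\delta)$ and $c^*\delta'=\mathbb{E}(c,Y_1)(\delta')$ (morphisms of $\mathfrak{s}$-triangles). $\mathcal{R}_2(X_\bullet,Y_\bullet)$ is the set of morphisms $\varphi_\bullet$ such that $\varphi_3$ factors through $g_2$; it is an ideal of $\mathfrak{s}\textup{-tri}(\mathcal{C})$, and $\underline{\varphi_\bullet}$ denotes the image in the quotient $\mathfrak{s}\textup{-tri}(\mathcal{C})/\mathcal{R}_2$. *)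

(* Defs.v *)
From HB Require Import structures.
From mathcomp Require Import all_boot all_algebra.
Set Implicit Arguments. Unset Strict Implicit. Unset Printing Implicit Defensive.
Import GRing.Theory.
Local Open Scope ring_scope.

Record CatData := {
  Obj :> Type;
  Mor : Obj -> Obj -> zmodType;
  idm : forall A, Mor A A;
  comp : forall A B C, Mor B C -> Mor A B -> Mor A C }.
Arguments Mor {c} A B.
Arguments idm {c} A.
Arguments comp {c A B C}.
Notation "g ∘ f" := (comp g f) (at level 40, left associativity).

Record PreAdd := {
  pcd :> CatData;
  compA : forall (A B C D : pcd) (h : Mor C D) (g : Mor B C) (f : Mor A B),
      h ∘ (g ∘ f) = (h ∘ g) ∘ f;
  comp1m : forall (A B : pcd) (f : Mor A B), idm B ∘ f = f;
  compm1 : forall (A B : pcd) (f : Mor A B), f ∘ idm A = f;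
  compDl : forall (A B C : pcd) (g g' : Mor B C) (f : Mor A B),
      (g + g') ∘ f = g ∘ f + g' ∘ f;
  compDr : forall (A B C : pcd) (g : Mor B C) (f f' : Mor A B),
      g ∘ (f + f') = g ∘ f + g ∘ f' }.

Record AddData := {
  apa :> PreAdd;
  zobj : apa;
  bip : apa -> apa -> apa;
  inl : forall A B : apa, Mor A (bip A B);
  inr : forall A B : apa, Mor B (bip A B);
  pl : forall A B : apa, Mor (bip A B) A;
  pr : forall A B : apa, Mor (bip A B) B }.
Arguments zobj {a}.
Arguments bip {a}.
Arguments inl {a} A B.
Arguments inr {a} A B.
Arguments pl {a} A B.
Arguments pr {a} A B.

Record AddCat := {
  ad :> AddData;
  zobj_ax : idm (@zobj ad) = 0;
  bip_ll : forall A B : ad, pl A B ∘ inl A B = idm A;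
  bip_rr : forall A B : ad, pr A B ∘ inr A B = idm B;
  bip_lr : forall A B : ad, pl A B ∘ inr A B = 0;
  bip_rl : forall A B : ad, pr A B ∘ inl A B = 0;
  bip_id : forall A B : ad, inl A B ∘ pl A B + inr A B ∘ pr A B = idm (bip A B) }.

Definition is_iso (C : CatData) (A B : C) (f : Mor A B) : Prop :=
  exists g : Mor B A, g ∘ f = idm A /\ f ∘ g = idm B.

(* E C A = E(C,A); Epush a δ = a_* δ; Epull c δ = c^* δ;
   realize δ x y  <->  the sequence A -x-> B -y-> C belongs to the
   equivalence class s(δ). *)
Record ExtriData := {
  eac :> AddCat;
  Ext : eac -> eac -> zmodType;
  Epush : forall (A A' C : eac), Mor A A' -> Ext C A -> Ext C A';
  Epull : forall (A C C' : eac), Mor C' C -> Ext C A -> Ext C' A;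
  realize : forall (A B C : eac), Ext C A -> Mor A B -> Mor B C -> Prop }.
Arguments Ext {e} C A.
Arguments Epush {e A A' C}.
Arguments Epull {e A C C'}.
Arguments realize {e A B C}.

Record ExtriCat := {
  ed :> ExtriData;
  EpushD : forall (A A' C : ed) (a : Mor A A') (d d' : Ext C A),
      Epush a (d + d') = Epush a d + Epush a d';
  EpullD : forall (A C C' : ed) (c : Mor C' C) (d d' : Ext C A),
      Epull c (d + d') = Epull c d + Epull c d';
  EpushDm : forall (A A' C : ed) (a a' : Mor A A') (d : Ext C A),
      Epush (a + a') d = Epush a d + Epush a' d;
  EpullDm : forall (A C C' : ed) (c c' : Mor C' C) (d : Ext C A),
      Epull (c + c') d = Epull c d + Epull c' d;
  Epush1 : forall (A C : ed) (d : Ext C A), Epush (idm A) d = d;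
  Epull1 : forall (A C : ed) (d : Ext C A), Epull (idm C) d = d;
  EpushM : forall (A A' A'' C : ed) (a : Mor A A') (a' : Mor A' A'') (d : Ext C A),
      Epush (a' ∘ a) d = Epush a' (Epush a d);
  EpullM : forall (A C C' C'' : ed) (c : Mor C' C) (c' : Mor C'' C') (d : Ext C A),
      Epull (c ∘ c') d = Epull c' (Epull c d);
  Epush_pull : forall (A A' C C' : ed) (a : Mor A A') (c : Mor C' C) (d : Ext C A),
      Epush a (Epull c d) = Epull c (Epush a d);
  real_ex : forall (A C : ed) (d : Ext C A),
      exists (B : ed) (x : Mor A B) (y : Mor B C), realize d x y;
  real_uniq : forall (A B B' C : ed) (d : Ext C A) (x : Mor A B) (y : Mor B C)
      (x' : Mor A B') (y' : Mor B' C),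
      realize d x y -> realize d x' y' ->
      exists b : Mor B B', is_iso b /\ b ∘ x = x' /\ y' ∘ b = y;
  real_closed : forall (A B B' C : ed) (d : Ext C A) (x : Mor A B) (y : Mor B C)
      (x' : Mor A B') (y' : Mor B' C) (b : Mor B B'),
      realize d x y -> is_iso b -> b ∘ x = x' -> y' ∘ b = y -> realize d x' y';
  real_mor : forall (A B C A' B' C' : ed) (d : Ext C A) (d' : Ext C' A')
      (x : Mor A B) (y : Mor B C) (x' : Mor A' B') (y' : Mor B' C')
      (a : Mor A A') (c : Mor C C'),
      realize d x y -> realize d' x' y' -> Epush a d = Epull c d' ->
      exists b : Mor B B', b ∘ x = x' ∘ a /\ c ∘ y = y' ∘ b;
  et2_zero : forall (A C : ed), realize (0 : Ext C A) (inl A C) (pr A C);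
  et2_sum : forall (A B C A' B' C' : ed) (d : Ext C A) (d' : Ext C' A')
      (th : Ext (bip C C') (bip A A'))
      (x : Mor A B) (y : Mor B C) (x' : Mor A' B') (y' : Mor B' C'),
      Epush (pl A A') (Epull (inl C C') th) = d ->
      Epush (pr A A') (Epull (inr C C') th) = d' ->
      Epush (pl A A') (Epull (inr C C') th) = 0 ->
      Epush (pr A A') (Epull (inl C C') th) = 0 ->
      realize d x y -> realize d' x' y' ->
      realize th (inl B B' ∘ x ∘ pl A A' + inr B B' ∘ x' ∘ pr A A')
                 (inl C C' ∘ y ∘ pl B B' + inr C C' ∘ y' ∘ pr B B');
  et3 : forall (A B C A' B' C' : ed) (d : Ext C A) (d' : Ext C' A')
      (x : Mor A B) (y : Mor B C) (x' : Mor A' B') (y' : Mor B' C')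
      (a : Mor A A') (b : Mor B B'),
      realize d x y -> realize d' x' y' -> b ∘ x = x' ∘ a ->
      exists c : Mor C C', c ∘ y = y' ∘ b /\ Epush a d = Epull c d';
  et3op : forall (A B C A' B' C' : ed) (d : Ext C A) (d' : Ext C' A')
      (x : Mor A B) (y : Mor B C) (x' : Mor A' B') (y' : Mor B' C')
      (b : Mor B B') (c : Mor C C'),
      realize d x y -> realize d' x' y' -> c ∘ y = y' ∘ b ->
      exists a : Mor A A', b ∘ x = x' ∘ a /\ Epush a d = Epull c d';
  et4 : forall (A B C D F : ed) (f : Mor A B) (f' : Mor B D) (g : Mor B C)
      (g' : Mor C F) (d : Ext D A) (d' : Ext F B),
      realize d f f' -> realize d' g g' ->
      exists (Eo : ed) (h : Mor A C) (h' : Mor C Eo) (dd : Mor D Eo) (e : Mor Eo F)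
        (d'' : Ext Eo A),
        realize d'' h h' /\ realize (Epush f' d') dd e /\
        Epull dd d'' = d /\ Epush f d'' = Epull e d' /\
        h = g ∘ f /\ dd ∘ f' = h' ∘ g /\ e ∘ h' = g';
  et4op : forall (A B C D F : ed) (f' : Mor D A) (f : Mor A B) (g' : Mor F B)
      (g : Mor B C) (d : Ext B D) (d' : Ext C F),
      realize d f' f -> realize d' g' g ->
      exists (Eo : ed) (dd : Mor D Eo) (e : Mor Eo F) (h' : Mor Eo A) (h : Mor A C)
        (d'' : Ext C Eo),
        realize d'' h' h /\ realize (Epull g' d) dd e /\
        Epush e d'' = d' /\ Epush dd d = Epull g d'' /\
        h = g ∘ f /\ h' ∘ dd = f' /\ f ∘ h' = g' ∘ e }.

Record Tri (C : ExtriCat) := {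
  T1 : C; T2 : C; T3 : C;
  tf1 : Mor T1 T2; tf2 : Mor T2 T3; tdel : Ext T3 T1;
  treal : realize tdel tf1 tf2 }.

Definition is_trimor (C : ExtriCat) (X Y : Tri C)
  (a1 : Mor (T1 X) (T1 Y)) (a2 : Mor (T2 X) (T2 Y)) (a3 : Mor (T3 X) (T3 Y)) : Prop :=
  a2 ∘ tf1 X = tf1 Y ∘ a1 /\ a3 ∘ tf2 X = tf2 Y ∘ a2 /\
  Epush a1 (tdel X) = Epull a3 (tdel Y).

Definition inR2 (C : ExtriCat) (X Y : Tri C)
  (a1 : Mor (T1 X) (T1 Y)) (a2 : Mor (T2 X) (T2 Y)) (a3 : Mor (T3 X) (T3 Y)) : Prop :=
  is_trimor a1 a2 a3 /\ exists h : Mor (T3 X) (T2 Y), a3 = tf2 Y ∘ h.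

(* underline(phi) = 0 in s-tri(C)/R_2, i.e. phi - 0 lies in R_2 *)
Definition quot_zero (C : ExtriCat) (X Y : Tri C)
  (a1 : Mor (T1 X) (T1 Y)) (a2 : Mor (T2 X) (T2 Y)) (a3 : Mor (T3 X) (T3 Y)) : Prop :=
  inR2 (a1 - 0) (a2 - 0) (a3 - 0).

(* underline(phi) is a monomorphism in s-tri(C)/R_2: for all morphisms
   psi, psi' : Z -> X, underline(phi psi) = underline(phi psi') implies
   underline(psi) = underline(psi'); equality in the quotient by the
   ideal R_2 means the difference lies in R_2. *)
Definition quot_mono (C : ExtriCat) (X Y : Tri C)
  (a1 : Mor (T1 X) (T1 Y)) (a2 : Mor (T2 X) (T2 Y)) (a3 : Mor (T3 X) (T3 Y)) : Prop :=
  forall (Z : Tri C)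
    (b1 : Mor (T1 Z) (T1 X)) (b2 : Mor (T2 Z) (T2 X)) (b3 : Mor (T3 Z) (T3 X))
    (c1 : Mor (T1 Z) (T1 X)) (c2 : Mor (T2 Z) (T2 X)) (c3 : Mor (T3 Z) (T3 X)),
    is_trimor b1 b2 b3 -> is_trimor c1 c2 c3 ->
    inR2 (a1 ∘ b1 - a1 ∘ c1) (a2 ∘ b2 - a2 ∘ c2) (a3 ∘ b3 - a3 ∘ c3) ->
    inR2 (b1 - c1) (b2 - c2) (b3 - c3).

Definition factors_through_right (C : CatData) (A B D : C)
  (f : Mor A D) (u : Mor A B) : Prop := exists v : Mor B D, f = v ∘ u.
Definition factors_through_left (C : CatData) (A B D : C)
  (f : Mor A D) (w : Mor B D) : Prop := exists v : Mor A B, f = w ∘ v.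

Definition is_section (C : CatData) (A B : C) (s : Mor A B) : Prop :=
  exists r : Mor B A, r ∘ s = idm A.

Definition colmap (C : AddCat) (A B B' : C) (f : Mor A B) (g : Mor A B') :
  Mor A (bip B B') := inl B B' ∘ f + inr B B' ∘ g.

(* Main.v *)
Require Import Defs.
From mathcomp Require Import all_boot all_algebra.
Set Implicit Arguments. Unset Strict Implicit. Unset Printing Implicit Defensive.
Import GRing.Theory.
Local Open Scope ring_scope.

Lemma addF0 (U V : zmodType) (F : U -> V) : {morph F : x y / x + y} -> F 0 = 0.
Proof. move=> H; apply: (@addrI _ (F 0)); by rewrite -H !addr0. Qed.

Lemma addFN (U V : zmodType) (F : U -> V) : {morph F : x y / x + y} ->
  forall x, F (- x) = - F x.
Proof.
move=> H x; apply: (@addrI _ (F x)); by rewrite -H !subrr addF0.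
Qed.

Lemma addFB (U V : zmodType) (F : U -> V) : {morph F : x y / x + y} ->
  forall x y, F (x - y) = F x - F y.
Proof. by move=> H x y; rewrite H addFN. Qed.

Section S.
Lemma comp0l (C : PreAdd) (A B D : C) (f : Mor A B) : (0 : Mor B D) ∘ f = 0.
Proof. apply: (addF0 (F := fun g : Mor B D => g ∘ f)) => g g'; exact: compDl. Qed.
Lemma comp0r (C : PreAdd) (A B D : C) (g : Mor B D) : g ∘ (0 : Mor A B) = 0.
Proof. apply: (addF0 (F := fun f : Mor A B => g ∘ f)) => f f'; exact: compDr. Qed.
Lemma compBl (C : PreAdd) (A B D : C) (g g' : Mor B D) (f : Mor A B) :
  (g - g') ∘ f = g ∘ f - g' ∘ f.
Proof. apply: (addFB (F := fun g : Mor B D => g ∘ f)) => x y; exact: compDl. Qed.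
Lemma compBr (C : PreAdd) (A B D : C) (g : Mor B D) (f f' : Mor A B) :
  g ∘ (f - f') = g ∘ f - g ∘ f'.
Proof. apply: (addFB (F := fun f : Mor A B => g ∘ f)) => x y; exact: compDr. Qed.

Lemma push0 (C : ExtriCat) (A A' D : C) (a : Mor A A') : Epush a (0 : Ext D A) = 0.
Proof. apply: (addF0 (F := Epush a)) => x y; exact: EpushD. Qed.
Lemma pull0 (C : ExtriCat) (A D D' : C) (c : Mor D' D) : Epull c (0 : Ext D A) = 0.
Proof. apply: (addF0 (F := Epull c)) => x y; exact: EpullD. Qed.
Lemma push0m (C : ExtriCat) (A A' D : C) (d : Ext D A) : Epush (0 : Mor A A') d = 0.
Proof. apply: (addF0 (F := fun a : Mor A A' => Epush a d)) => x y; exact: EpushDm. Qed.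
Lemma pull0m (C : ExtriCat) (A D D' : C) (d : Ext D A) : Epull (0 : Mor D' D) d = 0.
Proof. apply: (addF0 (F := fun c : Mor D' D => Epull c d)) => x y; exact: EpullDm. Qed.
Lemma pushBm (C : ExtriCat) (A A' D : C) (a a' : Mor A A') (d : Ext D A) :
  Epush (a - a') d = Epush a d - Epush a' d.
Proof. apply: (addFB (F := fun a : Mor A A' => Epush a d)) => x y; exact: EpushDm. Qed.
Lemma pullBm (C : ExtriCat) (A D D' : C) (c c' : Mor D' D) (d : Ext D A) :
  Epull (c - c') d = Epull c d - Epull c' d.
Proof. apply: (addFB (F := fun c : Mor D' D => Epull c d)) => x y; exact: EpullDm. Qed.

Lemma L1 (C : ExtriCat) (A B D : C) (d : Ext D A) (x : Mor A B) (y : Mor B D) :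
  realize d x y -> Epush x d = 0.
Proof.
move=> r.
have h0 : (0 : Mor D zobj) ∘ y = pr B zobj ∘ inl B zobj by rewrite comp0l bip_rl.
have [a [ha hp]] := et3op r (et2_zero B zobj) h0.
have -> : x = a.
  have := congr1 (fun m => pl B zobj ∘ m) ha => /=.
  by rewrite !Defs.compA bip_ll !comp1m.
by rewrite hp pull0.
Qed.

Lemma L2 (C : ExtriCat) (A B D : C) (d : Ext D A) (x : Mor A B) (y : Mor B D) :
  realize d x y -> Epull y d = 0.
Proof.
move=> r.
have h0 : pr zobj B ∘ inl zobj B = x ∘ (0 : Mor zobj A) by rewrite comp0r bip_rl.
have [c [hc hp]] := et3 (et2_zero zobj B) r h0.
have -> : y = c.
  have := congr1 (fun m => m ∘ inr zobj B) hc => /=.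
  by rewrite -!Defs.compA bip_rr !compm1.
by rewrite -hp push0.
Qed.

Lemma L3 (C : ExtriCat) (A B D A' : C) (d : Ext D A) (x : Mor A B) (y : Mor B D)
  (a : Mor A A') : realize d x y -> Epush a d = 0 -> exists v : Mor B A', a = v ∘ x.
Proof.
move=> r h.
have h0 : Epush a d = Epull (idm D) (0 : Ext D A') by rewrite h pull0.
have [b [hb _]] := real_mor r (et2_zero A' D) h0.
exists (pl A' D ∘ b).
by rewrite -Defs.compA hb Defs.compA bip_ll comp1m.
Qed.

Lemma L4 (C : ExtriCat) (A B D D' : C) (d : Ext D A) (x : Mor A B) (y : Mor B D)
  (c : Mor D' D) : realize d x y -> Epull c d = 0 -> exists v : Mor D' B, c = y ∘ v.
Proof.
move=> r h.
have h0 : Epush (idm A) (0 : Ext D' A) = Epull c d by rewrite h push0.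
have [b [_ hb]] := real_mor (et2_zero A D') r h0.
exists (b ∘ inr A D').
by rewrite Defs.compA -hb -Defs.compA bip_rr compm1.
Qed.

Lemma G (C : ExtriCat) (X Y : Tri C)
  (a1 : Mor (T1 X) (T1 Y)) (a2 : Mor (T2 X) (T2 Y)) (a3 : Mor (T3 X) (T3 Y)) :
  is_trimor a1 a2 a3 ->
  ((exists h, a3 = tf2 Y ∘ h) <-> (exists v, a1 = v ∘ tf1 X)).
Proof.
move=> [_ [_ e]]; split.
- move=> [h eh]; rewrite eh in e.
  apply: (L3 (treal X)).
  by rewrite e EpullM (L2 (treal Y)) pull0.
- move=> [v ev]; rewrite ev in e.
  apply: (L4 (treal Y)).
  by rewrite -e EpushM (L1 (treal X)) push0.
Qed.

Lemma trimorB (C : ExtriCat) (X Y : Tri C)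
  (a1 b1 : Mor (T1 X) (T1 Y)) (a2 b2 : Mor (T2 X) (T2 Y)) (a3 b3 : Mor (T3 X) (T3 Y)) :
  is_trimor a1 a2 a3 -> is_trimor b1 b2 b3 -> is_trimor (a1 - b1) (a2 - b2) (a3 - b3).
Proof.
move=> [h1 [h2 h3]] [k1 [k2 k3]]; split; [|split].
- by rewrite compBl compBr h1 k1.
- by rewrite compBl compBr h2 k2.
- by rewrite pushBm pullBm h3 k3.
Qed.

Lemma trimor0 (C : ExtriCat) (X Y : Tri C) :
  is_trimor (0 : Mor (T1 X) (T1 Y)) (0 : Mor (T2 X) (T2 Y)) (0 : Mor (T3 X) (T3 Y)).
Proof. by split; [|split]; rewrite ?comp0l ?comp0r ?push0m ?pull0m. Qed.
Lemma trimorM (C : ExtriCat) (Z X Y : Tri C)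
  (a1 : Mor (T1 X) (T1 Y)) (a2 : Mor (T2 X) (T2 Y)) (a3 : Mor (T3 X) (T3 Y))
  (b1 : Mor (T1 Z) (T1 X)) (b2 : Mor (T2 Z) (T2 X)) (b3 : Mor (T3 Z) (T3 X)) :
  is_trimor a1 a2 a3 -> is_trimor b1 b2 b3 -> is_trimor (a1 ∘ b1) (a2 ∘ b2) (a3 ∘ b3).
Proof.
move=> [h1 [h2 h3]] [k1 [k2 k3]]; split; [|split].
- by rewrite -Defs.compA k1 !Defs.compA h1.
- by rewrite -Defs.compA k2 !Defs.compA h2.
- by rewrite EpushM k3 Epush_pull h3 EpullM.
Qed.
End S.

Theorem lemma4p2 (C : ExtriCat) (X Y : Tri C)
  (phi1 : Mor (T1 X) (T1 Y)) (phi2 : Mor (T2 X) (T2 Y)) (phi3 : Mor (T3 X) (T3 Y)) :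
  is_trimor phi1 phi2 phi3 ->
  ((quot_zero phi1 phi2 phi3 <-> factors_through_right phi1 (tf1 X)) /\
   (factors_through_right phi1 (tf1 X) <-> factors_through_left phi3 (tf2 Y))) /\
  (quot_mono phi1 phi2 phi3 <-> is_section (colmap (tf1 X) phi1)).
Proof.
move=> hphi.
have hG := G hphi.
split; [split|].
- rewrite /quot_zero /inR2 !subr0; split.
  + by move=> [_ hh]; apply/hG.
  + by move=> hh; split => //; apply/hG.
- by split; move=> hh; apply/hG.
split.
- move=> hm.
  have [M [d [e re]]] := real_ex (Epush phi1 (tdel X)).
  have [Z2 [z1 [z2 rz]]] := real_ex (Epull e (tdel X)).
  pose Z : Tri C := Build_Tri rz.
  have e1 : Epush (idm (T1 X)) (Epull e (tdel X)) = Epull e (tdel X) by rewrite Epush1.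
  have [b2 [hb1 hb2]] := real_mor rz (treal X) e1.
  have hb : is_trimor (X := Z) (Y := X) (idm (T1 X)) b2 e.
    by split; [|split]; rewrite /= ?hb1 ?hb2 ?Epush1.
  have hcomp : is_trimor (X := Z) (phi1 ∘ idm (T1 X)) (phi2 ∘ b2) (phi3 ∘ e)
    by apply: trimorM.
  have hR : inR2 (X := Z) (Y := Y) (phi1 ∘ idm (T1 X) - phi1 ∘ 0) (phi2 ∘ b2 - phi2 ∘ 0)
      (phi3 ∘ e - phi3 ∘ 0).
    rewrite !comp0r !subr0; split => //.
    apply: (L4 (treal Y)).
    case: hphi => [_ [_ hp]].
    by rewrite EpullM -hp (L2 re).
  have [_ [h eh]] := hm Z _ _ _ _ _ _ hb (trimor0 Z X) hR.
  rewrite subr0 in eh.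
  have e2 : idm (T3 X) ∘ e = tf2 X ∘ h by rewrite comp1m.
  have [a [ha1 ha2]] := et3op re (treal X) e2.
  rewrite Epull1 in ha2.
  have e3 : Epush (idm (T1 X) - a ∘ phi1) (tdel X) = 0.
    by rewrite pushBm Epush1 EpushM ha2 subrr.
  have [v ev] := L3 (treal X) e3.
  exists (v ∘ pl _ _ + a ∘ pr _ _).
  rewrite /colmap compDl !compDr !Defs.compA -!(Defs.compA v) -!(Defs.compA a).
  rewrite bip_ll bip_rr bip_lr bip_rl !comp0l !comp0r !comp1m addr0 add0r -ev.
  by rewrite subrK.
- move=> [r hr] Z b1 b2 b3 c1 c2 c3 hb hc [ht [h eh]].
  have hx := trimorB hb hc.
  split => //; apply/(G hx).
  have [u eu] := (G ht).1 (ex_intro _ h eh).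
  exists (r ∘ (inl _ _ ∘ (b2 - c2) + inr _ _ ∘ u)).
  case: hx => [hx1 _].
  rewrite -Defs.compA compDl -!Defs.compA hx1 -eu -compBr !Defs.compA.
  by rewrite -compDl -/(colmap _ _) Defs.compA hr comp1m.
Qed.
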